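(* Let $E_1,E_2$ be para-Hilbert spaces and let $A=(X_A,H_A,Y_A)\colon E_1\to E_2$ be a morphism admitting a generalized inverse, i.e. a morphism $B\colon E_2\to E_1$ with $ABA=A$ and $BAB=B$. Then each of the following inclusions is dense: $i_{E_1}(\ker X_A)\subset\ker H_A$, $j_{E_1}(\ker H_A)\subset\ker Y_A$, $i_{E_2}(\operatorname{im}X_A)\subset\operatorname{im}H_A$, $j_{E_2}(\operatorname{im}H_A)\subset\operatorname{im}Y_A$.
   Context: A para-Hilbert space $E$ consists of Banach spaces $X_E,Y_E$, a Hilbert space $H_E$ with inner product and Riesz isomorphism $I_E\colon H_E\to H_E'$, bounded linear injections with dense image $i_E\colon X_E\to H_E$, $j_E\colon H_E\to Y_E$, and an isomorphism of Banach spaces $J_E\colon X_E\to Y_E'$ with $j_E'\circ J_E=I_E\circ i_E$ ($'$ denotes duals and dual operators). A morphism $A\colon E_1\to E_2$ is a triple of bounded linear operators $X_A\colon X_{E_1}\to X_{E_2}$, $H_A\colon H_{E_1}\to H_{E_2}$, $Y_A\colon Y_{E_1}\to Y_{E_2}$ with $i_{E_2}X_A=H_Ai_{E_1}$ and $j_{E_2}H_A=Y_Aj_{E_1}$; composition is componentwise. *)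

(* Defs.v *)
From HB Require Import structures.
From mathcomp Require Import all_boot all_order all_algebra.
From mathcomp Require Import all_classical all_reals all_analysis.
Set Implicit Arguments. Unset Strict Implicit. Unset Printing Implicit Defensive.
Import Order.TTheory GRing.Theory Num.Theory.
Import numFieldNormedType.Exports.
Local Open Scope ring_scope.
Local Open Scope classical_set_scope.

Section Defs.
Variable R : realType.

Definition bounded_linear (U V : normedModType R) (f : U -> V) : Prop :=
  (forall (a : R) (u v : U), f (a *: u + v) = a *: f u + f v) /\ continuous f.

Definition dense_range (U V : normedModType R) (f : U -> V) : Prop :=
  closure (range f) = setT.

(* a real inner product inducing the (complete) norm of H: H is a Hilbert space *)
Definition is_inner_product (H : normedModType R) (ip : H -> H -> R) : Prop :=
  [/\ (forall x y, ip x y = ip y x),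
      (forall (a : R) x y z, ip (a *: x + y) z = a * ip x z + ip y z) &
      (forall x, ip x x = `|x| ^+ 2)].

Definition cont_lin_functional (Y : normedModType R) (phi : Y -> R) : Prop :=
  (forall (a : R) (u v : Y), phi (a *: u + v) = a * phi u + phi v) /\ continuous phi.

(* J : X -> Y' is an isomorphism of Banach spaces onto the dual Y'
   (Y' with the operator norm) *)
Definition dual_iso (X Y : normedModType R) (J : X -> Y -> R) : Prop :=
  [/\ (forall x, cont_lin_functional (J x)),
      (forall (a : R) (x x' : X) (y : Y), J (a *: x + x') y = a * J x y + J x' y),
      (exists C : R, forall x y, `|J x y| <= C * `|x| * `|y|),
      (forall phi : Y -> R, cont_lin_functional phi -> exists x, J x = phi) &
      (exists C : R, forall (x : X) (M : R), 0 <= M ->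
          (forall y, `|J x y| <= M * `|y|) -> `|x| <= C * M)].

End Defs.

Record paraHilbert (R : realType) := ParaHilbert {
  PX : completeNormedModType R;
  PH : completeNormedModType R;
  PY : completeNormedModType R;
  pip : PH -> PH -> R;
  pip_inner : is_inner_product pip;
  iE : PX -> PH;
  jE : PH -> PY;
  JE : PX -> PY -> R;
  iE_bl : bounded_linear iE;
  iE_inj : injective iE;
  iE_dense : dense_range iE;
  jE_bl : bounded_linear jE;
  jE_inj : injective jE;
  jE_dense : dense_range jE;
  JE_iso : dual_iso JE;
  (* j' o J = I o i, where I h = <h, .> is the Riesz isomorphism *)
  JE_compat : forall (x : PX) (h : PH), JE x (jE h) = pip (iE x) h
}.

Record phMor (R : realType) (E1 E2 : paraHilbert R) := PHMor {
  mX : PX E1 -> PX E2;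
  mH : PH E1 -> PH E2;
  mY : PY E1 -> PY E2;
  mX_bl : bounded_linear mX;
  mH_bl : bounded_linear mH;
  mY_bl : bounded_linear mY;
  mXH : forall x, @iE R E2 (mX x) = mH (@iE R E1 x);
  mHY : forall h, @jE R E2 (mH h) = mY (@jE R E1 h)
}.

(* A B A = A, componentwise (composition of morphisms is componentwise) *)
Definition mor_ABA (R : realType) (E1 E2 : paraHilbert R)
    (A : phMor E1 E2) (B : phMor E2 E1) : Prop :=
  [/\ (forall x, mX A (mX B (mX A x)) = mX A x),
      (forall h, mH A (mH B (mH A h)) = mH A h) &
      (forall y, mY A (mY B (mY A y)) = mY A y)].

Definition dense_in (T : topologicalType) (S U : set T) : Prop :=
  S `<=` U /\ U `<=` closure S.

(* Main.v *)
Require Import Defs.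
From HB Require Import structures.
From mathcomp Require Import all_boot all_order all_algebra.
From mathcomp Require Import all_classical all_reals all_analysis.
Import Order.TTheory GRing.Theory Num.Theory.
Import numFieldNormedType.Exports.
Local Open Scope ring_scope.
Local Open Scope classical_set_scope.

Lemma closure_img (T S : topologicalType) (f : T -> S) (A : set T) (p : T) :
  continuous f -> closure A p -> closure (f @` A) (f p).
Proof.
move=> fc cp B nB.
have : nbhs p (f @^-1` B) by exact: fc.
move=> /cp [x [Ax Bx]]; exists (f x); split => //; by exists x.
Qed.

Section Aux.
Variable R : realType.

Lemma bl0 (U V : normedModType R) (f : U -> V) : bounded_linear f -> f 0 = 0.
Proof.
case=> lf _; have h := lf 1 0 0.
rewrite !scale1r addr0 in h.
have := congr1 (fun z => z - f 0) h; rewrite /= subrr addrK => <-; done.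
Qed.

Lemma blB (U V : normedModType R) (f : U -> V) u v : bounded_linear f ->
  f (u - v) = f u - f v.
Proof.
case=> lf _; have := lf (-1) v u.
by rewrite !scaleN1r addrC => ->; rewrite addrC.
Qed.

Lemma ker_dense (X H X2 H2 : normedModType R) (i : X -> H) (i2 : X2 -> H2)
  (xA : X -> X2) (xB : X2 -> X) (hA : H -> H2) (hB : H2 -> H) :
  bounded_linear i -> dense_range i -> bounded_linear i2 -> bounded_linear xA ->
  bounded_linear hA -> bounded_linear hB ->
  (forall x, i2 (xA x) = hA (i x)) -> (forall x, i (xB x) = hB (i2 x)) ->
  (forall x, xA (xB (xA x)) = xA x) ->
  dense_in (i @` [set x | xA x = 0]) [set h | hA h = 0].
Proof.
move=> bi di bi2 bxA bhA bhB cA cB aba; split.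
  move=> _ [x /= x0 <-]; by rewrite -cA x0 (@bl0 _ _ _ bi2).
move=> h /= h0.
pose f := fun h => h - hB (hA h).
have fc : continuous f.
  move=> z; apply: continuousB; first exact: cvg_id.
  apply: continuous_comp; [exact: bhA.2 | exact: bhB.2].
have hc : closure (range i) h by rewrite di.
have := @closure_img _ _ _ _ _ fc hc; rewrite /f h0 (@bl0 _ _ _ bhB) subr0.
apply: closureS => _ [_ [x _ <-] <-].
exists (x - xB (xA x)); first by rewrite /= (@blB _ _ _ _ _ bxA) aba subrr.
by rewrite (@blB _ _ _ _ _ bi) cB cA.
Qed.

Lemma range_dense (X H X2 H2 : normedModType R) (i : X -> H) (i2 : X2 -> H2)
  (xA : X -> X2) (hA : H -> H2) :
  dense_range i -> bounded_linear hA ->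
  (forall x, i2 (xA x) = hA (i x)) ->
  dense_in (i2 @` range xA) (range hA).
Proof.
move=> di bhA cA; split.
  move=> _ [_ [x _ <-] <-]; exists (i x) => //; by rewrite cA.
move=> _ [h _ <-].
have hc : closure (range i) h by rewrite di.
have := @closure_img _ _ _ _ _ bhA.2 hc.
apply: closureS => _ [_ [x _ <-] <-].
exists (xA x); [by exists x | exact: cA].
Qed.

End Aux.

Theorem corollary2p9 (R : realType) (E1 E2 : paraHilbert R)
    (A : phMor E1 E2) (B : phMor E2 E1) :
  mor_ABA A B -> mor_ABA B A ->
  [/\ dense_in (@iE R E1 @` [set x | mX A x = 0]) [set h | mH A h = 0],
      dense_in (@jE R E1 @` [set h | mH A h = 0]) [set y | mY A y = 0],
      dense_in (@iE R E2 @` range (mX A)) (range (mH A)) &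
      dense_in (@jE R E2 @` range (mH A)) (range (mY A))].
Proof.
move=> [abaX abaH abaY] _; split.
- apply: (@ker_dense _ _ _ _ _ _ _ _ (mX B) _ (mH B)).
  + exact: iE_bl. + exact: iE_dense. + exact: iE_bl. + exact: mX_bl.
  + exact: mH_bl. + exact: mH_bl. + exact: mXH. + exact: mXH. + exact: abaX.
- apply: (@ker_dense _ _ _ _ _ (@jE R E1) (@jE R E2) (mH A) (mH B) (mY A) (mY B)).
  + exact: jE_bl. + exact: jE_dense. + exact: jE_bl. + exact: mH_bl.
  + exact: mY_bl. + exact: mY_bl. + exact: mHY. + exact: mHY. + exact: abaH.
- apply: range_dense; [exact: iE_dense | exact: mH_bl | exact: mXH].
- apply: range_dense; [exact: jE_dense | exact: mY_bl | exact: mHY].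
Qed.
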